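(* Let $n\ge2$, let $K$ be a field and let $\mathcal{V}=(V,K')$ be a model of the theory of infinite-dimensional non-degenerate alternating $n$-linear spaces over fields elementarily equivalent to $K$, in the language $\mathcal{L}^{K}_{\theta,f}$. Let $U=\{v_i:i<\kappa\}\subseteq V$ be a $K'$-linearly independent set, and let $L\subseteq K'$ be a subfield containing $\{\langle v_{i_1},\ldots,v_{i_n}\rangle_n:0\le i_1<\cdots<i_n<\kappa\}$. Then the $\mathcal{L}^{K}_{\theta,f}$-substructure of $\mathcal{V}$ generated by $U\cup L$ equals $(\operatorname{Span}_L(U),L)$.
   Context: Alternating: the form vanishes on linearly dependent tuples; non-degenerate: for every nonzero $t\in\bigwedge^{n-1}V$ there is $w$ with $\langle t,w\rangle_2\ne0$, where $\langle\overline{v_1\otimes\cdots\otimes v_{n-1}},v\rangle_2=\langle v_1,\ldots,v_{n-1},v\rangle_n$. The language $\mathcal{L}^{K}_{\theta,f}$: sorts $V,K$; field language $\{+,\cdot,-,{}^{-1},0,1\}$ on $K$; $+_V,0_V$; scalar multiplication; the form symbol; predicates $\theta_p$ for linear independence; functions $f^p_i(v;v_1,\ldots,v_p)$ equal to the $i$-th coefficient of $v$ in terms of $v_1,\ldots,v_p$ if these are linearly independent and $v$ is in their span, and $0$ otherwise; and an expansion $\mathcal{L}^K$ of the field language by $\emptyset$-definable relations (no new function or constant symbols). *)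

(* Defs.v *)
From HB Require Import structures.
From mathcomp Require Import all_boot all_order all_algebra.
Set Implicit Arguments. Unset Strict Implicit. Unset Printing Implicit Defensive.
Import Order.TTheory GRing.Theory Num.Theory.
Local Open Scope ring_scope.

(* Sentences of the language of (unit) rings with NO constants from any
   structure: terms/formulas over the empty type [void].                    *)
Fixpoint term_in (R : Type) (t : GRing.term void) : GRing.term R :=
  match t with
  | GRing.Var i => @GRing.Var R i
  | GRing.Const x => match x with end
  | GRing.NatConst k => @GRing.NatConst R k
  | GRing.Add a b => GRing.Add (term_in R a) (term_in R b)
  | GRing.Opp a => GRing.Opp (term_in R a)
  | GRing.NatMul a k => GRing.NatMul (term_in R a) k
  | GRing.Mul a b => GRing.Mul (term_in R a) (term_in R b)
  | GRing.Inv a => GRing.Inv (term_in R a)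
  | GRing.Exp a k => GRing.Exp (term_in R a) k
  end.

Fixpoint formula_in (R : Type) (f : GRing.formula void) : GRing.formula R :=
  match f with
  | GRing.Bool b => @GRing.Bool R b
  | GRing.Equal a b => GRing.Equal (term_in R a) (term_in R b)
  | GRing.Unit a => GRing.Unit (term_in R a)
  | GRing.And f g => GRing.And (formula_in R f) (formula_in R g)
  | GRing.Or f g => GRing.Or (formula_in R f) (formula_in R g)
  | GRing.Implies f g => GRing.Implies (formula_in R f) (formula_in R g)
  | GRing.Not f => GRing.Not (formula_in R f)
  | GRing.Exists i f => GRing.Exists i (formula_in R f)
  | GRing.Forall i f => GRing.Forall i (formula_in R f)
  end.

Definition elem_equiv (K1 K2 : fieldType) : Prop :=
  forall f : GRing.formula void,
    GRing.holds [::] (formula_in K1 f) <-> GRing.holds [::] (formula_in K2 f).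

Definition lin_indep (K : fieldType) (V : lmodType K) (I : eqType) (v : I -> V) : Prop :=
  forall (s : seq I) (c : I -> K), uniq s ->
    \sum_(i <- s) c i *: v i = 0 -> forall i, i \in s -> c i = 0.

Definition infinite_dim (K : fieldType) (V : lmodType K) : Prop :=
  ~ exists s : seq V, forall v : V,
      exists c : nat -> K, v = \sum_(i < size s) c i *: s`_i.

Definition span_over (K : fieldType) (V : lmodType K) (I : eqType)
  (L : K -> Prop) (U : I -> V) (v : V) : Prop :=
  exists (s : seq I) (c : I -> K), (forall i, L (c i)) /\ v = \sum_(i <- s) c i *: U i.

Definition is_subfield (K : fieldType) (L : K -> Prop) : Prop :=
  [/\ L 0, L 1,
      (forall x y, L x -> L y -> L (x + y)),
      (forall x y, L x -> L y -> L (x * y)) &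
      (forall x, L x -> L (- x)) /\ (forall x, L x -> L x^-1)].

Definition upd (V : Type) (n : nat) (x : {ffun 'I_n -> V}) (j : 'I_n) (y : V)
  : {ffun 'I_n -> V} := [ffun k => if k == j then y else x k].

Definition multilinear_to (K : fieldType) (V W : lmodType K) (n : nat)
  (g : {ffun 'I_n -> V} -> W) : Prop :=
  forall (x : {ffun 'I_n -> V}) (j : 'I_n) (a : K) (u w : V),
    g (upd x j (a *: u + w)) = a *: g (upd x j u) + g (upd x j w).

Definition alternating_to (K : fieldType) (V W : lmodType K) (n : nat)
  (g : {ffun 'I_n -> V} -> W) : Prop :=
  forall x : {ffun 'I_n -> V}, ~ lin_indep (fun k : 'I_n => x k) -> g x = 0.

Definition tup (V : Type) (n : nat) (g : nat -> V) : {ffun 'I_n -> V} :=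
  [ffun k : 'I_n => g (val k)].

(* The element  sum_p p.2 * (p.1 0 /\ ... /\ p.1 (m-1))  of the exterior power
   /\^m V is zero.  /\^m V is characterised by its universal property: an
   element is zero iff every alternating m-linear map sends it to 0. *)
Definition ext_zero (K : fieldType) (V : lmodType K) (m : nat)
  (r : seq ((nat -> V) * K)) : Prop :=
  forall (W : lmodType K) (g : {ffun 'I_m -> V} -> W),
    multilinear_to g -> alternating_to g ->
    \sum_(p <- r) p.2 *: g (tup m p.1) = 0.

(* ⟨t, w⟩_2 for t = sum_p p.2 * (p.1 0 /\ ... /\ p.1 (n-2)) *)
Definition pair2 (K : fieldType) (V : lmodType K) (n : nat)
  (form : {ffun 'I_n -> V} -> K) (r : seq ((nat -> V) * K)) (w : V) : K :=
  \sum_(p <- r) p.2 * form (tup n (fun k => if (k < n.-1)%N then p.1 k else w)).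

Definition nondegenerate (K : fieldType) (V : lmodType K) (n : nat)
  (form : {ffun 'I_n -> V} -> K) : Prop :=
  forall r : seq ((nat -> V) * K), ~ ext_zero n.-1 r ->
    exists w : V, pair2 form r w != 0.

Definition nda_form (K : fieldType) (V : lmodType K) (n : nat)
  (form : {ffun 'I_n -> V} -> K) : Prop :=
  [/\ multilinear_to (form : {ffun 'I_n -> V} -> K^o),
      alternating_to (form : {ffun 'I_n -> V} -> K^o) &
      nondegenerate form].

(* Graph of the function symbol f^p_i (with 0-based i < p): y = f^p_i(v; vs 0..vs (p-1)). *)
Definition fsym_graph (K : fieldType) (V : lmodType K) (p i : nat)
  (v : V) (vs : nat -> V) (y : K) : Prop :=
  let indep := lin_indep (fun k : 'I_p => vs (val k)) in
  let inspan := exists c : nat -> K, v = \sum_(k < p) c k *: vs k in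
  (indep /\ exists c : nat -> K, v = \sum_(k < p) c k *: vs k /\ y = c i)
  \/ (~ (indep /\ inspan) /\ y = 0).

(* (W, F) is closed under all function symbols of L^K_{theta,f}
   (the relation symbols theta_p and those of L^K play no role). *)
Definition closed_sub (K : fieldType) (V : lmodType K) (n : nat)
  (form : {ffun 'I_n -> V} -> K) (W : V -> Prop) (F : K -> Prop) : Prop :=
  [/\
      [/\ F 0, F 1,
          (forall x y, F x -> F y -> F (x + y)),
          (forall x y, F x -> F y -> F (x * y)) &
          (forall x, F x -> F (- x)) /\ (forall x, F x -> F x^-1)],
      [/\ W 0,
          (forall u w, W u -> W w -> W (u + w)) &
          (forall a u, F a -> W u -> W (a *: u))],
      (forall x : {ffun 'I_n -> V}, (forall k, W (x k)) -> F (form x)) &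
      (forall (p i : nat) (v : V) (vs : nat -> V) (y : K),
          (i < p)%N -> W v -> (forall k, (k < p)%N -> W (vs k)) ->
          fsym_graph p i v vs y -> F y)].

Definition gen_V (K : fieldType) (V : lmodType K) (n : nat)
  (form : {ffun 'I_n -> V} -> K) (A : V -> Prop) (B : K -> Prop) (v : V) : Prop :=
  forall W F, closed_sub form W F -> (forall u, A u -> W u) ->
    (forall a, B a -> F a) -> W v.

Definition gen_K (K : fieldType) (V : lmodType K) (n : nat)
  (form : {ffun 'I_n -> V} -> K) (A : V -> Prop) (B : K -> Prop) (a : K) : Prop :=
  forall W F, closed_sub form W F -> (forall u, A u -> W u) ->
    (forall b, B b -> F b) -> F a.

(* Main.v *)
Require Import Defs.
From HB Require Import structures.
From mathcomp Require Import all_boot all_order all_algebra.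
From mathcomp Require Import fingroup perm.
Set Implicit Arguments. Unset Strict Implicit. Unset Printing Implicit Defensive.
Import Order.TTheory GRing.Theory Num.Theory.
Local Open Scope ring_scope.

Section Sub.
Variables (F : fieldType) (L : F -> Prop) (HL : is_subfield L).

Lemma L0 : L 0. Proof. by case: HL. Qed.
Lemma L1 : L 1. Proof. by case: HL. Qed.
Lemma LD x y : L x -> L y -> L (x + y). Proof. by case: HL => _ _ H _ _; apply: H. Qed.
Lemma LM x y : L x -> L y -> L (x * y). Proof. by case: HL => _ _ _ H _; apply: H. Qed.
Lemma LN x : L x -> L (- x). Proof. by case: HL => _ _ _ _ [H _]; apply: H. Qed.
Lemma LV x : L x -> L (x^-1). Proof. by case: HL => _ _ _ _ [_ H]; apply: H. Qed.

Lemma L_sum (I : Type) (r : seq I) (P : pred I) (f : I -> F) :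
  (forall i, P i -> L (f i)) -> L (\sum_(i <- r | P i) f i).
Proof. move=> H; apply: big_ind => //; [exact: L0 | exact: LD]. Qed.

Lemma L_prod (I : Type) (r : seq I) (P : pred I) (f : I -> F) :
  (forall i, P i -> L (f i)) -> L (\prod_(i <- r | P i) f i).
Proof. move=> H; apply: big_ind => //; [exact: L1 | exact: LM]. Qed.

Lemma L_natmul x k : L x -> L (x *+ k).
Proof. move=> Hx; elim: k => [|k IH]; first by rewrite mulr0n; exact: L0.
by rewrite mulrS; apply: LD. Qed.

Lemma L_sign (b : bool) : L ((-1) ^+ b).
Proof. by case: b; rewrite ?expr1 ?expr0; [apply: LN; apply: L1 | apply: L1]. Qed.

Lemma L_signn (k : nat) : L ((-1) ^+ k).
Proof. elim: k => [|k IH]; first by rewrite expr0; apply: L1.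
by rewrite exprS; apply: LM => //; apply: LN; apply: L1. Qed.

Lemma L_det k (A : 'M[F]_k) : (forall i j, L (A i j)) -> L (\det A).
Proof.
move=> H; rewrite /determinant; apply: L_sum => s _; apply: LM; first exact: L_sign.
by apply: L_prod => i _; apply: H.
Qed.

Lemma L_invmx k (A : 'M[F]_k) : (forall i j, L (A i j)) -> forall i j, L (invmx A i j).
Proof.
move=> H i j; rewrite /invmx; case: (A \in unitmx) => //.
rewrite !mxE; apply: LM; first by apply: LV; apply: L_det.
rewrite /cofactor; apply: LM; first exact: L_signn.
by apply: L_det => a b; rewrite !mxE.
Qed.

Lemma L_mulmx m k p (A : 'M[F]_(m, k)) (B : 'M[F]_(k, p)) :
  (forall i j, L (A i j)) -> (forall i j, L (B i j)) -> forall i j, L ((A *m B) i j).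
Proof. move=> HA HB i j; rewrite !mxE; apply: L_sum => l _; exact: LM. Qed.

End Sub.

Section Span.
Variables (F : fieldType) (V : lmodType F) (I : eqType) (U : I -> V)
  (L : F -> Prop) (HL : is_subfield L).

Lemma sum_count (S s : seq I) (G : I -> V) : uniq S -> {subset s <= S} ->
  \sum_(i <- s) G i = \sum_(j <- S) G j *+ count_mem j s.
Proof.
move=> uS; elim: s => [|i s IH] sub.
  by rewrite big_nil big1 // => j _; rewrite mulr0n.
rewrite big_cons IH; last by move=> j js; apply: sub; rewrite inE js orbT.
have iS : i \in S by apply: sub; rewrite inE eqxx.
rewrite [in RHS](eq_bigr (fun j => G j *+ (i == j) + G j *+ count_mem j s)); last first.
  by move=> j _; rewrite /= mulrnDr.
rewrite big_split /=; congr (_ + _).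
rewrite (bigD1_seq i) //= eqxx mulr1n big1 ?addr0 // => j /negPf.
by rewrite eq_sym => ->; rewrite mulr0n.
Qed.

Lemma span_norm (S s : seq I) (c : I -> F) : uniq S -> {subset s <= S} ->
  \sum_(i <- s) c i *: U i = \sum_(j <- S) (c j *+ count_mem j s) *: U j.
Proof.
move=> uS sub; rewrite (sum_count _ uS sub); apply: eq_bigr => j _.
by rewrite scalerMnl.
Qed.

Lemma span0 : span_over L U 0.
Proof. exists [::], (fun _ => 0); split; first by move=> _; exact: L0. by rewrite big_nil. Qed.

Lemma spanD x y : span_over L U x -> span_over L U y -> span_over L U (x + y).
Proof.
move=> [s1 [c1 [H1 ->]]] [s2 [c2 [H2 ->]]].
set S := undup (s1 ++ s2).
have uS : uniq S by exact: undup_uniq.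
have s1S : {subset s1 <= S} by move=> j js; rewrite mem_undup mem_cat js.
have s2S : {subset s2 <= S} by move=> j js; rewrite mem_undup mem_cat js orbT.
exists S, (fun j => c1 j *+ count_mem j s1 + c2 j *+ count_mem j s2); split.
  by move=> j; apply: LD => //; apply: L_natmul.
rewrite (span_norm _ uS s1S) (span_norm _ uS s2S) -big_split /=.
by apply: eq_bigr => j _; rewrite scalerDl.
Qed.

Lemma spanZ a x : L a -> span_over L U x -> span_over L U (a *: x).
Proof.
move=> Ha [s [c [Hc ->]]]; exists s, (fun j => a * c j); split.
  by move=> j; apply: LM.
by rewrite scaler_sumr; apply: eq_bigr => j _; rewrite scalerA.
Qed.

Lemma spanU i : span_over L U (U i).
Proof.
exists [:: i], (fun _ => 1); split; first by move=> _; exact: L1.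
by rewrite big_seq1 scale1r.
Qed.

End Span.

Section Form.
Variables (F : fieldType) (V : lmodType F) (n : nat)
  (form : {ffun 'I_n -> V} -> F)
  (Hml : multilinear_to (form : {ffun 'I_n -> V} -> F^o))
  (Halt : alternating_to (form : {ffun 'I_n -> V} -> F^o)).

Lemma fml x j a u w :
  form (upd x j (a *: u + w)) = a * form (upd x j u) + form (upd x j w).
Proof. exact: Hml. Qed.

Lemma form_dup (x : {ffun 'I_n -> V}) a b : a != b -> x a = x b -> form x = 0.
Proof.
move=> nab exy; apply: Halt => H.
have uab : uniq [:: a; b] by rewrite /= inE nab.
have := H [:: a; b] (fun k => if k == a then 1 else -1) uab.
rewrite big_cons big_seq1 eqxx eq_sym (negPf nab) scale1r scaleN1r exy subrr.
move=> /(_ erefl a (mem_head _ _)) /eqP; rewrite eqxx.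
by rewrite oner_eq0.
Qed.

Lemma form_upd0 x j : form (upd x j 0) = 0.
Proof.
have := fml x j 1 0 0; rewrite scaler0 addr0 mul1r.
by move/(congr1 (fun t => t - form (upd x j 0))); rewrite subrr addrK.
Qed.

Lemma formD x j u w : form (upd x j (u + w)) = form (upd x j u) + form (upd x j w).
Proof. by have := fml x j 1 u w; rewrite scale1r mul1r. Qed.

Lemma formZ x j a u : form (upd x j (a *: u)) = a * form (upd x j u).
Proof. by have := fml x j a u 0; rewrite addr0 form_upd0 addr0. Qed.

Lemma upd_comm (x : {ffun 'I_n -> V}) a b u w : a != b ->
  upd (upd x a u) b w = upd (upd x b w) a u.
Proof.
move=> nab; apply/ffunP => k; rewrite !ffunE.
case: (eqVneq k b) => [kb|kb]; case: (eqVneq k a) => [ka|ka] //.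
by move: nab; rewrite -ka -kb eqxx.
Qed.

Lemma form_swap (x : {ffun 'I_n -> V}) a b : a != b ->
  form [ffun k => x (tperm a b k)] = - form x.
Proof.
move=> nab.
pose g u w := form (upd (upd x a u) b w).
have gD1 : forall u1 u2 w, g (u1 + u2) w = g u1 w + g u2 w.
  by move=> u1 u2 w; rewrite /g !(upd_comm _ _ _ nab) formD.
have gD2 : forall u w1 w2, g u (w1 + w2) = g u w1 + g u w2.
  by move=> u w1 w2; rewrite /g formD.
have g0 : forall u, g u u = 0.
  move=> u; apply: (@form_dup _ a b nab).
  by rewrite !ffunE eqxx (negPf nab) eqxx.
have e1 : g (x a) (x b) = form x.
  congr form; apply/ffunP => k; rewrite !ffunE.
  by case: (eqVneq k b) => [->|]//; case: (eqVneq k a) => [->|].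
have e2 : g (x b) (x a) = form [ffun k => x (tperm a b k)].
  congr form; apply/ffunP => k; rewrite !ffunE.
  case: tpermP => [->|->|/eqP ka /eqP kb]; first by rewrite (negPf nab) eqxx.
    by rewrite eqxx.
  by rewrite (negPf ka) (negPf kb).
have := g0 (x a + x b); rewrite gD1 !gD2 !g0 add0r addr0 e1 e2.
by move=> H; apply/eqP; rewrite -addr_eq0 addrC -H.
Qed.

Lemma form_perm (s : 'S_n) (x y : {ffun 'I_n -> V}) :
  (forall k, y k = x (s k)) -> form y = form x \/ form y = - form x.
Proof.
case: (prod_tpermP s) => ts -> Hd.
elim: ts x y Hd => [|t ts IH] x y Hd Hy.
  left; congr form; apply/ffunP => k; rewrite Hy big_nil perm1 //.
move: Hd => /= /andP [dt Hd].
set P := (\prod_(t <- ts) tperm t.1 t.2)%g.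
have := IH x [ffun k => x (P k)] Hd (fun k => ffunE _ _).
have Hy' : y = [ffun k => [ffun k0 => x (P k0)] (tperm t.1 t.2 k)].
  by apply/ffunP => k; rewrite Hy !ffunE big_cons permM.
rewrite Hy' form_swap //.
by case => ->; [right | left; rewrite opprK].
Qed.

End Form.

Section FormL.
Variables (F : fieldType) (V : lmodType F) (n : nat)
  (form : {ffun 'I_n -> V} -> F)
  (Hml : multilinear_to (form : {ffun 'I_n -> V} -> F^o))
  (Halt : alternating_to (form : {ffun 'I_n -> V} -> F^o))
  (d : Order.disp_t) (I : orderType d) (v : I -> V) (L : F -> Prop)
  (HL : is_subfield L)
  (Hinc : forall idx : 'I_n -> I, (forall j k : 'I_n, (j < k)%N -> (idx j < idx k)%O) ->
     L (form [ffun k => v (idx k)])).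

Lemma form_basis (idx : 'I_n -> I) : L (form [ffun k => v (idx k)]).
Proof.
case: (boolP (injectiveb idx)) => [/injectiveP inj | /injectivePn [a [b nab eab]]];
  last by rewrite (@form_dup _ _ _ _ Halt _ a b nab); [exact: L0 | rewrite !ffunE eab].
pose t := [tuple idx k | k < n].
have ut : uniq t by rewrite map_inj_uniq ?enum_uniq.
have pst : perm_eq (sort <=%O (t : seq I)) t by rewrite perm_sort perm_refl.
case/tuple_permP: pst => s Hs.
have srt : sorted <%O (sort <=%O (t : seq I)) by rewrite sort_lt_sorted.
have Hinc' : forall j k : 'I_n, (j < k)%N -> (idx (s j) < idx (s k))%O.
  move=> j k jk.
  have := sorted_ltn_nth lt_trans (idx (s j)) srt.
  move=> /(_ j k); rewrite !inE size_sort size_tuple !ltn_ord => /(_ isT isT jk).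
  rewrite Hs -!tnth_nth !tnth_mktuple.
  by [].
have := Hinc Hinc'.
have := @form_perm _ _ _ _ Hml Halt s [ffun k => v (idx k)] [ffun k => v (idx (s k))].
case=> [k|->|->]; first by rewrite !ffunE.
  by [].
by move=> H; have := LN HL H; rewrite opprK.
Qed.

Lemma form_span (x : {ffun 'I_n -> V}) :
  (forall k, span_over L v (x k)) -> L (form x).
Proof.
have P : forall j, forall x : {ffun 'I_n -> V},
    (forall k : 'I_n, (k < j)%N -> span_over L v (x k)) ->
    (forall k : 'I_n, (j <= k)%N -> exists i, x k = v i) -> L (form x).
  elim=> [|j IH] y Hs Hb.
    have [idx Hidx] : exists idx : 'I_n -> I, forall k, y k = v (idx k).
      by apply: (@fin_all_exists _ (fun _ => I) (fun k i => y k = v i)) => k; apply: Hb.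
    have -> : y = [ffun k => v (idx k)] by apply/ffunP => k; rewrite ffunE Hidx.
    exact: form_basis.
  case: (ltnP j n) => [jn|nj]; last first.
    apply: IH => k Hk; first by apply: Hs; apply: ltnW.
    by move: (leq_trans nj Hk); rewrite leqNgt ltn_ord.
  pose J := Ordinal jn.
  have [s [c [Hc Hyj]]] := Hs J (ltnSn j).
  have -> : y = upd y J (\sum_(i <- s) c i *: v i).
    by apply/ffunP => k; rewrite ffunE; case: eqP => [->|]; rewrite ?Hyj.
  elim: s {Hyj} => [|i s IHs].
    by rewrite big_nil (@form_upd0 _ _ _ _ Hml); exact: L0.
  rewrite big_cons (@fml _ _ _ _ Hml); apply: LD => //; apply: LM => //.
  apply: IH => k Hk; rewrite ffunE.
    have kJ : (k == J) = false by apply/negbTE; rewrite -val_eqE /= neq_ltn Hk.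
    by rewrite kJ; apply: Hs; apply: ltnW.
  case: eqP => [_|kJ]; first by exists i.
  apply: Hb; rewrite ltn_neqAle Hk andbT.
  by apply/eqP => jk; apply: kJ; apply: val_inj.
by move=> Hx; apply: (P n) => // k; rewrite leqNgt ltn_ord.
Qed.

End FormL.

Section Fsym.
Variables (F : fieldType) (V : lmodType F) (I : eqType) (v : I -> V)
  (L : F -> Prop) (HL : is_subfield L) (Hv : lin_indep v).

Lemma fsym_L p i (w : V) (vs : nat -> V) (c : nat -> F) :
  (i < p)%N -> span_over L v w -> (forall k, (k < p)%N -> span_over L v (vs k)) ->
  lin_indep (fun k : 'I_p => vs k) -> w = \sum_(k < p) c k *: vs k -> L (c i).
Proof.
move=> ip [sw [cw [Hcw Hw]]] Hvs Hind Hwc.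
have HH : forall k : 'I_p, exists fk : (seq I * (I -> F))%type,
    (forall j, L (fk.2 j)) /\ vs k = \sum_(j <- fk.1) fk.2 j *: v j.
  move=> k; have [s [cc [H1 H2]]] := Hvs k (ltn_ord k).
  by exists (s, cc).
have [f Hf] := fin_all_exists HH.
set S := undup (sw ++ flatten [seq (f k).1 | k <- enum 'I_p]).
have uS : uniq S by exact: undup_uniq.
have swS : {subset sw <= S} by move=> j js; rewrite mem_undup mem_cat js.
have fS : forall k, {subset (f k).1 <= S}.
  move=> k j js; rewrite mem_undup mem_cat; apply/orP; right.
  by apply/flattenP; exists (f k).1 => //; apply: map_f; rewrite mem_enum.
pose a (k : 'I_p) j := (f k).2 j *+ count_mem j (f k).1.
pose b j := cw j *+ count_mem j sw.
have La : forall k j, L (a k j) by move=> k j; apply: L_natmul => //; case: (Hf k).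
have Lb : forall j, L (b j) by move=> j; apply: L_natmul.
have Evs : forall k : 'I_p, vs k = \sum_(j <- S) a k j *: v j.
  by move=> k; case: (Hf k) => _ ->; rewrite (span_norm _ _ uS (fS k)).
have Ew : w = \sum_(j <- S) b j *: v j by rewrite Hw (span_norm _ _ uS swS).
set m := size S.
pose u (r : 'I_m) := tnth (in_tuple S) r.
pose A := \matrix_(k < p, r < m) a k (u r).
pose bb := \row_(r < m) b (u r).
pose cr := \row_(k < p) c k.
have key : forall z : 'rV_p,
    \sum_(k < p) z 0 k *: vs k = \sum_(r < m) (z *m A) 0 r *: v (u r).
  move=> z.
  under eq_bigr => k _ do rewrite Evs big_tnth scaler_sumr.
  rewrite exchange_big /=; apply: eq_bigr => r _.
  rewrite !mxE scaler_suml; apply: eq_bigr => k _.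
  by rewrite mxE scalerA.
have indS : forall dd : 'rV_m, \sum_(r < m) dd 0 r *: v (u r) = 0 -> dd = 0.
  move=> dd H0.
  pose cc j := oapp (fun r : 'I_m => dd 0 r) 0 (insub (index j S)).
  have ccu : forall r, cc (u r) = dd 0 r.
    move=> r; rewrite /cc /u (tnth_nth (tnth (in_tuple S) r)) /= index_uniq //.
    by rewrite valK.
  have := (Hv : forall s c, uniq s -> _) S cc uS.
  rewrite big_tnth.
  under eq_bigr => r _ do rewrite ccu.
  move=> /(_ H0) Hz; apply/rowP => r; rewrite mxE -ccu; apply: Hz.
  by rewrite /u mem_tnth.
have Hcr : cr *m A = bb.
  apply/eqP; rewrite -subr_eq0; apply/eqP; apply: indS.
  have -> : \sum_(r < m) (cr *m A - bb) 0 r *: v (u r) =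
            \sum_(r < m) (cr *m A) 0 r *: v (u r) - \sum_(r < m) bb 0 r *: v (u r).
    by rewrite -sumrB; apply: eq_bigr => r _; rewrite !mxE scalerBl.
  rewrite -key.
  have -> : \sum_(r < m) bb 0 r *: v (u r) = w.
    by rewrite Ew [RHS]big_tnth; apply: eq_bigr => r _; rewrite mxE.
  rewrite Hwc; under eq_bigr => k _ do rewrite mxE.
  by rewrite subrr.
have Zinj : forall z : 'rV_p, z *m A = 0 -> z = 0.
  move=> z Hz.
  have H0 : \sum_(k < p) z 0 k *: vs k = 0.
    by rewrite key Hz; apply: big1 => r _; rewrite mxE scale0r.
  have := Hind (enum 'I_p) (fun k => z 0 k) (enum_uniq _).
  rewrite big_enum /= => /(_ H0) Hk; apply/rowP => k; rewrite mxE.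
  by apply: Hk; rewrite mem_enum.
have rfA : row_free A.
  rewrite -kermx_eq0; apply/eqP/row_matrixP => k; rewrite row0; apply: Zinj.
  by rewrite -row_mul mulmx_ker row0.
have rfAT : row_full A^T by rewrite /row_full mxrank_tr.
set g := fullrankfun rfAT.
pose M := rowsub g A^T.
have uM : M \in unitmx by exact: fullrowsub_unit.
pose N := M^T.
have uN : N \in unitmx by rewrite unitmx_tr.
have LN_ : forall k l, L (N k l) by move=> k l; rewrite !mxE.
have HcN : cr *m N = colsub g bb.
  apply/rowP => k; have E : (cr *m A) 0 (g k) = bb 0 (g k) by rewrite Hcr.
  rewrite !mxE in E *; rewrite -E; apply: eq_bigr => l _; rewrite !mxE //.
have Ecr : cr = colsub g bb *m invmx N by rewrite -HcN mulmxK.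
have -> : c i = cr 0 (Ordinal ip) by rewrite mxE.
rewrite Ecr; apply: L_mulmx => //; first by move=> k l; rewrite !mxE.
exact: L_invmx.
Qed.

End Fsym.

Theorem lemma2p15 (n : nat) (K K' : fieldType) (V : lmodType K')
    (form : {ffun 'I_n -> V} -> K')
    (d : Order.disp_t) (I : orderType d) (v : I -> V) (L : K' -> Prop) :
  (2 <= n)%N ->
  elem_equiv K K' ->
  infinite_dim V ->
  nda_form form ->
  lin_indep v ->
  is_subfield L ->
  (forall idx : 'I_n -> I, (forall j k : 'I_n, (j < k)%N -> (idx j < idx k)%O) ->
     L (form [ffun k => v (idx k)])) ->
  (forall x : V, gen_V form (fun u => exists i, u = v i) L x <-> span_over L v x) /\
  (forall a : K', gen_K form (fun u => exists i, u = v i) L a <-> L a).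
Proof.
move=> _ _ _ [Hml Halt _] Hv HL Hinc.
have Hcl : closed_sub form (span_over L v) L.
  split.
  - exact: HL.
  - split; [exact: span0 | exact: spanD | exact: spanZ].
  - by move=> x Hx; apply: (form_span Hml Halt HL Hinc).
  - move=> p i w vs y ip Hw Hvs [[Hind [c [Hwc ->]]] | [_ ->]]; last exact: L0.
    exact: (fsym_L HL Hv ip Hw Hvs Hind Hwc).
have HU : forall u, (exists i, u = v i) -> span_over L v u.
  by move=> u [i ->]; apply: spanU.
split=> [x|a]; split.
- by move=> H; exact: (H _ _ Hcl HU (fun a h => h)).
- move=> [s [c [Hc ->]]] W F [_ [W0 WD WZ] _ _] HA HB.
  elim: s => [|i s IH]; first by rewrite big_nil.
  by rewrite big_cons; apply: WD => //; apply: WZ; [apply: HB | apply: HA; exists i].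
- by move=> H; exact: (H _ _ Hcl HU (fun a h => h)).
- by move=> Ha W F _ _ HB; apply: HB.
Qed.
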